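(* Fix a positive integer $k$. For all real $\tilde c_0$ and $A_1$, and for every $n\ge0$ and every sequence $s$ of non-negative integers with finitely many nonzero terms, the number $B^n_s$ computed with $w=\tilde c_{k-1}$ is homogeneous of degree $|s|$ in $A_1$: there is a number $\beta^n_s(k)$, depending only on $n,s,k$ (not on $\tilde c_0$ or $A_1$), with $B^n_s=\beta^n_s(k)\,A_1^{|s|}$.
   Context: Given real numbers $\tilde c_0,A_1,w$, set $\tilde c_j=\tilde c_0-jA_1$ for all integers $j$. Sequences $s=(s_0,s_1,\dots)$ are integer sequences with finitely many nonzero terms; $(0)$ the zero sequence; $|s|=\sum s_i$, $[s]=\sum s_i(i+1)$; $\sigma_0=(1,0,0,\dots)$, and for $i\ge1$, $\sigma_i$ has $-1$ at position $i-1$, $+1$ at position $i$, $0$ elsewhere. For $n\ge0$ and $s$ with non-negative entries, $B^n_s$ is defined by induction on $n+[s]$: $B^0_{(0)}=1$, and otherwise $B^n_s=(1-\delta_{s_0,0})(n+|s|-1)(\tilde c_{n+|s|-2}-w)\sum_{l=0}^{n-1}B^l_{s-\sigma_0}+\sum_{i\ge1}(1-\delta_{s_i,0})(s_{i-1}+1)\sum_{l=0}^{n-1}B^l_{s-\sigma_i}$ (empty sums vanish). *)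

(* Defs.v *)
From HB Require Import structures.
From mathcomp Require Import all_boot all_order all_algebra.
From mathcomp Require Import reals.
Set Implicit Arguments. Unset Strict Implicit. Unset Printing Implicit Defensive.
Import Order.TTheory GRing.Theory Num.Theory.
Local Open Scope ring_scope.

(* Finitely supported integer sequences s = (s_0, s_1, ...) with non-negative
   entries are represented by s : seq nat, with s_i := nth 0 s i (trailing
   positions are 0). *)

(* |s| = sumn s ; [s] = \sum_i s_i (i+1) *)
Definition wt (s : seq nat) : nat := (\sum_(i < size s) nth 0 s i * i.+1)%N.

Definition sub_sigma0 (s : seq nat) : seq nat :=
  set_nth 0%N s 0 (nth 0%N s 0).-1.

Definition sub_sigma (s : seq nat) (i : nat) : seq nat :=
  let s' := set_nth 0%N s i (nth 0%N s i).-1 in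
  set_nth 0%N s' i.-1 (nth 0%N s' i.-1).+1.

Definition ct {R : realType} (c0 A1 : R) (j : int) : R := c0 - j%:~R * A1.

(* B with fuel f; correct whenever f >= n + [s] (fuel decreases by one
   per recursive call while n + [s] decreases by at least two). *)
Fixpoint Bf {R : realType} (c0 A1 w : R) (f n : nat) (s : seq nat) : R :=
  match f with
  | 0%N => if (n == 0%N) && (sumn s == 0%N) then 1 else 0
  | f'.+1 =>
    if (n == 0%N) && (sumn s == 0%N) then 1 else
      (if nth 0%N s 0 != 0%N then
         ((n + sumn s)%:R - 1) * (ct c0 A1 ((n + sumn s)%:Z - 2) - w)
           * \sum_(l < n) Bf c0 A1 w f' l (sub_sigma0 s)
       else 0)
    + \sum_(1 <= i < size s | nth 0%N s i != 0%N)
        (nth 0%N s i.-1).+1%:R * \sum_(l < n) Bf c0 A1 w f' l (sub_sigma s i)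
  end.

Definition B {R : realType} (c0 A1 w : R) (n : nat) (s : seq nat) : R :=
  Bf c0 A1 w (n + wt s) n s.

(* Main.v *)
Require Import Defs.
From HB Require Import structures.
From mathcomp Require Import all_boot all_order all_algebra.
From mathcomp Require Import reals.
From mathcomp Require Import zify ring lra.
Import Order.TTheory GRing.Theory Num.Theory.
Local Open Scope ring_scope.

Lemma nth_le_sumn (s : seq nat) i : (nth 0%N s i <= sumn s)%N.
Proof.
elim: s i => [|a s IH] [|i] //=; first exact: leq_addr.
by apply: leq_trans (IH i) (leq_addl _ _).
Qed.

Lemma sumn_sub_sigma0 s : nth 0%N s 0 != 0%N ->
  sumn s = (sumn (sub_sigma0 s)).+1.
Proof.
move=> h; rewrite /sub_sigma0 sumn_set_nth0.
have := nth_le_sumn s 0; lia.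
Qed.

Lemma sumn_sub_sigma s i : nth 0%N s i != 0%N ->
  sumn (sub_sigma s i) = sumn s.
Proof.
move=> h; rewrite /sub_sigma sumn_set_nth0 sumn_set_nth0.
have := nth_le_sumn s i; lia.
Qed.

Fixpoint betaf {R : realType} (k : nat) (f n : nat) (s : seq nat) : R :=
  match f with
  | 0%N => if (n == 0%N) && (sumn s == 0%N) then 1 else 0
  | f'.+1 =>
    if (n == 0%N) && (sumn s == 0%N) then 1 else
      (if nth 0%N s 0 != 0%N then
         ((n + sumn s)%:R - 1) * (((k%:Z - 1) - ((n + sumn s)%:Z - 2))%:~R)
           * \sum_(l < n) betaf k f' l (sub_sigma0 s)
       else 0)
    + \sum_(1 <= i < size s | nth 0%N s i != 0%N)
        (nth 0%N s i.-1).+1%:R * \sum_(l < n) betaf k f' l (sub_sigma s i)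
  end.

Lemma Bf_hom (R : realType) (k : nat) f : forall n s (c0 A1 : R),
  Bf c0 A1 (ct c0 A1 (k%:Z - 1)) f n s = betaf k f n s * A1 ^+ sumn s.
Proof.
elim: f => [|f IH] n s c0 A1 /=.
  by case: ifP => /= h; [move: h => /andP[_ /eqP ->]; rewrite expr0 mul1r | rewrite mul0r].
case: ifP => h0.
  by move: h0 => /andP[_ /eqP ->]; rewrite expr0 mul1r.
rewrite [RHS]mulrDl; congr (_ + _).
  case: ifP => hs; last by rewrite mul0r.
  have Hs := @sumn_sub_sigma0 s hs.
  rewrite -> Hs.
  under eq_bigr => l _ do rewrite IH.
  rewrite -big_distrl /= exprS.
  have -> : ct c0 A1 ((n + (sumn (sub_sigma0 s)).+1)%:Z - 2) - ct c0 A1 (k%:Z - 1)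
     = ((k%:Z - 1) - ((n + (sumn (sub_sigma0 s)).+1)%:Z - 2))%:~R * A1.
    by rewrite /ct intrB; ring.
  ring.
rewrite big_distrl /=; apply: eq_bigr => i hs.
under eq_bigr => l _ do rewrite IH.
rewrite sumn_sub_sigma //.
by rewrite -big_distrl /= mulrA.
Qed.

Theorem lemma7p8 (R : realType) (k : nat) (hk : (0 < k)%N) :
  forall (n : nat) (s : seq nat), exists beta : R,
    forall c0 A1 : R,
      B c0 A1 (ct c0 A1 (k%:Z - 1)) n s = beta * A1 ^+ sumn s.
Proof.
move=> n s; exists (betaf k (n + wt s) n s) => c0 A1.
exact: Bf_hom.
Qed.
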